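(* Let $m\ge1$ and let $\{P^0=I^{\otimes m},P^1,\ldots,P^{2^m-1}\}\subset\mathcal{P}_m$ be a set of distinct Pauli strings with no non-unit prefactors that is closed under multiplication up to constants, i.e. $P^i\ne P^j$ for $i\ne j$ and for all $i,j$ there is $k$ with $P^iP^j\propto P^k$. Then there exists a state $\ket\phi\in(\mathbb{C}^2)^{\otimes m}$ such that $\bra\phi P^i\ket\phi=0$ for all $i\ne0$.
   Context: $\mathcal{P}_m$ is the $m$-qubit Pauli group: all operators $i^\lambda O_1\otimes\cdots\otimes O_m$ with $\lambda\in\{0,1,2,3\}$ and $O_j\in\{I,X,Y,Z\}$; a Pauli string with no non-unit prefactor is one with $\lambda=0$. *)

(* Defs.v *)
From mathcomp Require Import all_boot all_order all_algebra all_field.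
Set Implicit Arguments. Unset Strict Implicit. Unset Printing Implicit Defensive.
Import Order.TTheory GRing.Theory Num.Theory.
Local Open Scope ring_scope.

Inductive pauli := PI | PX | PY | PZ.

(* Computational basis state of m qubits: a bit string. *)
Definition bits (m : nat) := {ffun 'I_m -> bool}.

(* Matrix entries <a| sigma |b> of the single-qubit Pauli matrices,
   false = |0>, true = |1>. Y = [[0,-i],[i,0]], Z = diag(1,-1). *)
Definition pauli_entry (o : pauli) (a b : bool) : algC :=
  match o with
  | PI => if a == b then 1 else 0
  | PX => if a == b then 0 else 1
  | PY => if a == b then 0 else (if a then 'i else - 'i)
  | PZ => if a == b then (if a then -1 else 1) else 0
  end.

(* A Pauli string with no prefactor: O_1 (x) ... (x) O_m. *)
Definition pstring (m : nat) := 'I_m -> pauli.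

Definition pmat (m : nat) (p : pstring m) (x y : bits m) : algC :=
  \prod_(j < m) pauli_entry (p j) (x j) (y j).

Definition opmul (m : nat) (A B : bits m -> bits m -> algC) (x y : bits m) : algC :=
  \sum_(z : bits m) A x z * B z y.

Definition proportional (m : nat) (A B : bits m -> bits m -> algC) : Prop :=
  exists c : algC, forall x y, A x y = c * B x y.

Definition expect (m : nat) (A : bits m -> bits m -> algC) (phi : bits m -> algC) : algC :=
  \sum_(x : bits m) \sum_(y : bits m) (phi x)^* * A x y * phi y.

Definition is_state (m : nat) (phi : bits m -> algC) : Prop :=
  \sum_(x : bits m) (phi x)^* * phi x = 1.

(* Main.v *)
Require Import Defs.
From HB Require Import structures.
From mathcomp Require Import all_boot all_order all_algebra all_field.
From mathcomp Require Import ring zify.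
Set Implicit Arguments. Unset Strict Implicit. Unset Printing Implicit Defensive.
Import Order.TTheory GRing.Theory Num.Theory.
Local Open Scope ring_scope.

Definition p2b (o : pauli) : bool * bool :=
  match o with PI => (false,false) | PX => (true,false) | PZ => (false,true) | PY => (true,true) end.
Definition b2p (b : bool * bool) : pauli :=
  match b with (false,false) => PI | (true,false) => PX | (false,true) => PZ | (true,true) => PY end.
Lemma p2bK : cancel p2b b2p. Proof. by case. Qed.
HB.instance Definition _ := Finite.copy pauli (can_type p2bK).

Definition pmul (a b : pauli) : pauli :=
  match a, b with
  | PI, o | o, PI => o
  | PX, PX | PY, PY | PZ, PZ => PI
  | PX, PY | PY, PX => PZ
  | PY, PZ | PZ, PY => PX
  | PZ, PX | PX, PZ => PY
  end.
Definition ph (a b : pauli) : algC :=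
  match a, b with
  | PX, PY | PY, PZ | PZ, PX => 'i
  | PY, PX | PZ, PY | PX, PZ => - 'i
  | _, _ => 1
  end.
Definition ac1 (a b : pauli) : bool :=
  match a, b with
  | PI, _ | _, PI => false
  | PX, PX | PY, PY | PZ, PZ => false
  | _, _ => true
  end.

Definition M1 (a b : pauli) (x y : bool) : algC :=
  \sum_(u : bool) pauli_entry a x u * pauli_entry b u y.

Lemma iiE : 'i * 'i = -1 :> algC. Proof. by rewrite -expr2 sqrCi. Qed.

Lemma M1E a b x y : M1 a b x y = ph a b * pauli_entry (pmul a b) x y.
Proof.
rewrite /M1 big_bool /=.
case: a; case: b; case: x; case: y => /=;
rewrite ?(mulr0, mul0r, mulr1, mul1r, addr0, add0r, mulrN, mulNr, opprK, iiE) //.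
Qed.

Lemma ph_comm a b : ph a b = (-1) ^+ ac1 a b * ph b a.
Proof. by case: a; case: b; rewrite /= ?expr1 ?expr0 ?mul1r ?mulN1r ?opprK. Qed.
Lemma pmulC a b : pmul a b = pmul b a. Proof. by case: a; case: b. Qed.
Lemma pmulA a b c : pmul a (pmul b c) = pmul (pmul a b) c.
Proof. by case: a; case: b; case: c. Qed.
Lemma pmulaa a : pmul a a = PI. Proof. by case: a. Qed.
Lemma pmul1a a : pmul PI a = a. Proof. by case: a. Qed.
Lemma ph_aa a : ph a a = 1. Proof. by case: a. Qed.
Lemma ph_neq0 a b : ph a b != 0.
Proof.
have ni : 'i != 0 :> algC by rewrite neq0Ci.
by case: a; case: b; rewrite /= ?oner_neq0 ?oppr_eq0.
Qed.
Lemma ac1C a b : ac1 a b = ac1 b a. Proof. by case: a; case: b. Qed.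
Lemma ac1aa a : ac1 a a = false. Proof. by case: a. Qed.
Lemma ac1D a b c : ac1 (pmul a b) c = ac1 a c (+) ac1 b c.
Proof. by case: a; case: b; case: c. Qed.
Lemma entryI x y : pauli_entry PI x y = (x == y)%:R.
Proof. by case: x; case: y. Qed.
Lemma conjCNi : (- 'i)^* = 'i :> algC. Proof. by rewrite -conjCi conjCK. Qed.
Lemma entry_conj o a b : (pauli_entry o a b)^* = pauli_entry o b a.
Proof.
by case: o; case: a; case: b; rewrite /= ?conjC0 ?conjC1 ?conjCN1 ?conjCi ?conjCNi.
Qed.
Lemma entry_orth a b :
  \sum_(x : bool) \sum_(y : bool) (pauli_entry a x y)^* * pauli_entry b x y
  = if a == b then 2 else 0.
Proof.
rewrite !big_bool /=.
case: a; case: b => /=;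
rewrite ?(conjC0, conjC1, conjCN1, conjCi, conjCNi, opprK, mulr0, mul0r, mulr1, mul1r, addr0, add0r, mulrN, mulNr, iiE, addNr, subrr, oppr0) //.
Qed.

Section Multi.
Variable m : nat.
Implicit Types P Q R : pstring m.

Definition smul P Q : pstring m := fun j => pmul (P j) (Q j).
Definition phs P Q : algC := \prod_(j < m) ph (P j) (Q j).
Definition omega P Q : bool := \big[addb/false]_(j < m) ac1 (P j) (Q j).

Lemma sum_prod (F : 'I_m -> bool -> algC) :
  \sum_(z : bits m) \prod_(j < m) F j (z j) = \prod_(j < m) \sum_(u : bool) F j u.
Proof. by rewrite (bigA_distr_bigA F). Qed.

Lemma opmul_pmat P Q x y :
  opmul (pmat P) (pmat Q) x y = \prod_(j < m) M1 (P j) (Q j) (x j) (y j).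
Proof.
rewrite /opmul /M1 -(sum_prod (fun j u => pauli_entry (P j) (x j) u * pauli_entry (Q j) u (y j))).
by apply: eq_bigr => z _; rewrite /pmat -big_split.
Qed.

Lemma opmul_smul P Q x y :
  opmul (pmat P) (pmat Q) x y = phs P Q * pmat (smul P Q) x y.
Proof.
by rewrite opmul_pmat /phs /pmat -big_split; apply: eq_bigr => j _; rewrite M1E.
Qed.

Lemma phs_neq0 P Q : phs P Q != 0.
Proof. by rewrite /phs prodf_seq_neq0; apply/allP => j _; rewrite ph_neq0. Qed.

Lemma sign_big (f : 'I_m -> bool) :
  \prod_(j < m) (-1) ^+ f j = (-1) ^+ (\big[addb/false]_(j < m) f j) :> algC.
Proof.
elim/big_rec2: _ => [|j b c _ ->]; first by rewrite expr0.
by case: (f j); case: b; rewrite /= ?expr0 ?expr1 ?mul1r ?mulN1r ?opprK.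
Qed.

Lemma opmul_comm P Q x y :
  opmul (pmat P) (pmat Q) x y = (-1) ^+ omega P Q * opmul (pmat Q) (pmat P) x y.
Proof.
rewrite !opmul_pmat /omega -sign_big -big_split; apply: eq_bigr => j _.
by rewrite !M1E ph_comm pmulC /= mulrA.
Qed.

Lemma pmatI x y : pmat (fun _ : 'I_m => PI) x y = (x == y)%:R :> algC.
Proof.
rewrite /pmat; under eq_bigr => j _ do rewrite entryI.
case: eqP => [->|/eqP ne]; first by rewrite big1 // => j _; rewrite eqxx.
have [j hj] : exists j, x j != y j.
  by apply/existsP; apply: contraR ne => /existsPn h; apply/eqP/ffunP => j; apply/eqP; move: (h j); rewrite negbK.
by rewrite (bigD1 j) //= (negbTE hj) mul0r.
Qed.

Lemma opmul_self P x y : opmul (pmat P) (pmat P) x y = (x == y)%:R.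
Proof.
rewrite opmul_smul /phs (eq_bigr (fun _ => 1)) ?big1_eq ?mul1r; last by move=> j _; rewrite ph_aa.
rewrite -pmatI /pmat; apply: eq_bigr => j _; by rewrite /smul pmulaa.
Qed.

Lemma pmat_conj P x y : (pmat P x y)^* = pmat P y x.
Proof. by rewrite /pmat rmorph_prod; apply: eq_bigr => j _; exact: entry_conj. Qed.

Lemma pmat_orth P Q :
  \sum_(x : bits m) \sum_(y : bits m) (pmat P x y)^* * pmat Q x y
  = \prod_(j < m) (if P j == Q j then 2 else 0).
Proof.
under eq_bigr => x _ do under eq_bigr => y _ do rewrite /pmat rmorph_prod -big_split /=.
under eq_bigr => x _ do rewrite (sum_prod (fun j u => (pauli_entry (P j) (x j) u)^* * pauli_entry (Q j) (x j) u)).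
rewrite (sum_prod (fun j a => \sum_(u : bool) (pauli_entry (P j) a u)^* * pauli_entry (Q j) a u)).
by apply: eq_bigr => j _; rewrite entry_orth.
Qed.

End Multi.

Lemma prop_smul m (P Q T : pstring m) :
  proportional (opmul (pmat P) (pmat Q)) (pmat T) -> forall j, pmul (P j) (Q j) = T j.
Proof.
case=> c hc.
set R := smul P Q.
have e1 : \sum_(x : bits m) \sum_(y : bits m) (pmat R x y)^* * (phs P Q * pmat R x y)
        = \sum_(x : bits m) \sum_(y : bits m) (pmat R x y)^* * (c * pmat T x y).
  by apply: eq_bigr => x _; apply: eq_bigr => y _; rewrite -hc opmul_smul.
have e2 (d : algC) (U : pstring m) : \sum_(x : bits m) \sum_(y : bits m) (pmat R x y)^* * (d * pmat U x y)
      = d * \prod_(j < m) (if R j == U j then 2 else 0).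
  rewrite -pmat_orth mulr_sumr; apply: eq_bigr => x _; rewrite mulr_sumr; apply: eq_bigr => y _.
  by rewrite mulrCA.
rewrite !e2 in e1.
have nz : phs P Q * \prod_(j < m) (if R j == R j then 2 else 0) != 0.
  rewrite mulf_neq0 ?phs_neq0 // prodf_seq_neq0; apply/allP => j _; by rewrite eqxx pnatr_eq0.
rewrite e1 in nz.
move=> j; apply/eqP; move: nz; rewrite mulf_eq0 negb_or => /andP[_].
rewrite (bigD1 j) //= mulf_eq0 negb_or => /andP[].
rewrite /R /smul; case: (pmul (P j) (Q j) =P T j) => // _; by rewrite eqxx.
Qed.

Section Eigen.
Variable m : nat.
Definition app (A : bits m -> bits m -> algC) (v : bits m -> algC) (x : bits m) : algC :=
  \sum_(y : bits m) A x y * v y.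

Lemma app_app A B v x : app A (app B v) x = app (opmul A B) v x.
Proof.
rewrite /app /opmul.
under eq_bigr => y _ do rewrite mulr_sumr.
rewrite exchange_big /=; apply: eq_bigr => z _.
by rewrite mulr_suml; apply: eq_bigr => y _; rewrite mulrA.
Qed.

Lemma app_lin A v u s x : app A (fun y => v y + s * u y) x = app A v x + s * app A u x.
Proof.
rewrite /app mulr_sumr -big_split; apply: eq_bigr => y _ /=.
by rewrite mulrDr mulrCA.
Qed.

Lemma app_scale A v l x : app A (fun y => l * v y) x = l * app A v x.
Proof. by rewrite /app mulr_sumr; apply: eq_bigr => y _; rewrite mulrCA. Qed.

Lemma app_ext A v u x : (forall y, v y = u y) -> app A v x = app A u x.
Proof. by move=> h; rewrite /app; apply: eq_bigr => y _; rewrite h. Qed.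

Lemma app_self (g : pstring m) v x : app (pmat g) (app (pmat g) v) x = v x.
Proof.
rewrite app_app /app (eq_bigr (fun y => (x == y)%:R * v y)); last by move=> y _; rewrite opmul_self.
by rewrite (bigD1 x) //= eqxx mul1r big1 ?addr0 // => y /negbTE; rewrite eq_sym => ->; rewrite mul0r.
Qed.

Lemma app_comm (g h : pstring m) v x : omega g h = false ->
  app (pmat g) (app (pmat h) v) x = app (pmat h) (app (pmat g) v) x.
Proof.
move=> o; rewrite !app_app /app; apply: eq_bigr => y _.
by rewrite opmul_comm o expr0 mul1r.
Qed.

Definition eigv (g : pstring m) (v : bits m -> algC) :=
  exists l : algC, (l = 1 \/ l = -1) /\ forall x, app (pmat g) v x = l * v x.

Lemma common_eig (gs : seq {ffun 'I_m -> pauli}) :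
  (forall g h, g \in gs -> h \in gs -> omega g h = false) ->
  exists v : bits m -> algC, (exists x, v x != 0) /\ forall g, g \in gs -> eigv g v.
Proof.
elim: gs => [|g gs IH] hp.
  exists (fun x => (x == [ffun=> false])%:R); split => //.
  by exists [ffun=> false]; rewrite eqxx oner_neq0.
have [v [[x0 hx0] hv]] : exists v : bits m -> algC, (exists x, v x != 0) /\ forall g, g \in gs -> eigv g v.
  by apply: IH => a b ha hb; apply: hp; rewrite inE ?ha ?hb orbT.
pose w s := fun x => v x + s * app (pmat g) v x.
have wg s : s * s = 1 -> forall x, app (pmat g) (w s) x = s * w s x.
  move=> ss x; rewrite /w app_lin app_self mulrDr mulrA ss mul1r addrC //.
have wo s : forall h, h \in gs -> eigv h (w s).
  move=> h hh; have [l [hl el]] := hv h hh; exists l; split => // x.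
  rewrite /w app_lin el mulrDr; congr (_ + _).
  rewrite app_comm; last by apply: hp; rewrite inE ?hh ?orbT ?eqxx.
  rewrite (@app_ext _ _ (fun y => l * v y)) // app_scale; by rewrite mulrCA.
have eg s : s * s = 1 -> (s = 1 \/ s = -1) -> (exists x, w s x != 0) -> exists v : bits m -> algC, (exists x, v x != 0) /\ forall h, h \in g :: gs -> eigv h v.
  move=> ss hs hx; exists (w s); split => // h; rewrite inE => /orP[/eqP ->|hh]; last exact: wo.
  by exists s; split => //; apply: wg.
case: (boolP [exists x, w 1 x != 0]) => [/existsP [x hx]|/existsPn none].
  by apply: (eg 1) => //; [rewrite mulr1 | left | exists x].
apply: (eg (-1)) => //; [by rewrite mulrNN mulr1 | by right | exists x0].
have := none x0; rewrite negbK /w !mul1r mulN1r => /eqP h0.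
have -> : app (pmat g) v x0 = - v x0 by apply/eqP; rewrite -addr_eq0 addrC h0.
by rewrite opprK -mulr2n mulrn_eq0 negb_or hx0.
Qed.
End Eigen.

Lemma omegaC m (P Q : pstring m) : omega P Q = omega Q P.
Proof. by rewrite /omega; apply: eq_bigr => j _; rewrite ac1C. Qed.

Lemma expect_zero m (P g : pstring m) v : eigv g v -> omega P g = true ->
  expect (pmat P) v = 0.
Proof.
case=> l [hl el] o.
have lc : l^* = l by case: hl => ->; rewrite ?conjC1 ?conjCN1.
have l0 : l != 0 by case: hl => ->; rewrite ?oppr_eq0 oner_neq0.
have eE A : expect A v = \sum_x (v x)^* * app A v x.
  by rewrite /expect; apply: eq_bigr => x _; rewrite /app mulr_sumr; apply: eq_bigr => y _; rewrite mulrA.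
set E := expect _ _.
have h1 : l * E = \sum_x (v x)^* * app (pmat P) (app (pmat g) v) x.
  rewrite /E eE mulr_sumr; apply: eq_bigr => x _; rewrite mulrCA; congr (_ * _).
  by rewrite -app_scale; apply: app_ext => y; rewrite el.
have h2 : l * E = \sum_x (app (pmat g) v x)^* * app (pmat P) v x.
  rewrite /E eE mulr_sumr; apply: eq_bigr => x _; rewrite el rmorphM /= lc mulrA //.
have h3 : \sum_x (app (pmat g) v x)^* * app (pmat P) v x
        = \sum_x (v x)^* * app (pmat g) (app (pmat P) v) x.
  under eq_bigr => x _ do rewrite /app rmorph_sum mulr_suml.
  rewrite exchange_big /=; apply: eq_bigr => z _; rewrite mulr_sumr; apply: eq_bigr => x _.
  rewrite rmorphM /= pmat_conj; by rewrite mulrCA mulrA.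
have h4 : forall z, app (pmat g) (app (pmat P) v) z = - app (pmat P) (app (pmat g) v) z.
  move=> z; rewrite !app_app /app -sumrN; apply: eq_bigr => y _.
  by rewrite opmul_comm omegaC o expr1 mulN1r mulNr.
have : l * E = - (l * E).
  rewrite {1}h2 h3 h1 -sumrN; apply: eq_bigr => x _; by rewrite h4 mulrN.
move/eqP; rewrite -addr_eq0 -mulr2n mulrn_eq0 /= mulf_eq0 (negbTE l0) /=.
by move/eqP.
Qed.

Lemma normalize m (v : bits m -> algC) : (exists x, v x != 0) ->
  exists phi : bits m -> algC, is_state phi /\ forall A, expect A v = 0 -> expect A phi = 0.
Proof.
case=> x0 hx0.
set N := \sum_(x : bits m) (v x)^* * v x.
have N0 : 0 <= N by apply: sumr_ge0 => x _; rewrite mulrC mul_conjC_ge0.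
have Nn0 : N != 0.
  have hge : forall x : bits m, true -> 0 <= (v x)^* * v x by move=> x _; rewrite mulrC mul_conjC_ge0.
  apply/eqP => hN; have := psumr_eq0P hge hN (i := x0) isT; rewrite mulrC => /eqP; rewrite mulf_eq0 (negbTE hx0) /= conjC_eq0.
  by rewrite (negbTE hx0).
set c := (sqrtC N)^-1.
have cc : c^* = c by apply: geC0_conj; rewrite invr_ge0 sqrtC_ge0.
have c2 : c * c * N = 1.
  by rewrite /c -invfM -expr2 sqrtCK mulVf.
exists (fun x => c * v x); split.
  rewrite /is_state -c2 /N mulr_sumr; apply: eq_bigr => x _.
  rewrite rmorphM /= cc; ring.
move=> A hA; rewrite /expect.
transitivity (c * c * expect A v); last by rewrite hA mulr0.
rewrite /expect mulr_sumr; apply: eq_bigr => x _; rewrite mulr_sumr; apply: eq_bigr => y _.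
rewrite rmorphM /= cc; ring.
Qed.
Section Comb.
Variable m : nat.
Definition V := {ffun 'I_m -> pauli}.
Definition vmul (a b : V) : V := [ffun j => pmul (a j) (b j)].
Definition vone : V := [ffun=> PI].
Definition om (a b : V) : bool := omega a b.

Lemma vmulC a b : vmul a b = vmul b a.
Proof. by apply/ffunP => j; rewrite !ffunE pmulC. Qed.
Lemma vmulA a b c : vmul a (vmul b c) = vmul (vmul a b) c.
Proof. by apply/ffunP => j; rewrite !ffunE pmulA. Qed.
Lemma vmul1 a : vmul vone a = a.
Proof. by apply/ffunP => j; rewrite !ffunE pmul1a. Qed.
Lemma vmulvv a : vmul a a = vone.
Proof. by apply/ffunP => j; rewrite !ffunE pmulaa. Qed.
Lemma vmulK a b : vmul a (vmul a b) = b.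
Proof. by rewrite vmulA vmulvv vmul1. Qed.

Lemma omD a b c : om (vmul a b) c = om a c (+) om b c.
Proof.
rewrite /om /omega -big_split /=; apply: eq_bigr => j _; by rewrite ffunE ac1D.
Qed.
Lemma omC a b : om a b = om b a. Proof. exact: omegaC. Qed.
Lemma omDr a b c : om c (vmul a b) = om c a (+) om c b.
Proof. by rewrite omC omD !(omC c). Qed.
Lemma omaa a : om a a = false.
Proof. by rewrite /om /omega big1 // => j _; rewrite ac1aa. Qed.
Lemma om1 a : om vone a = false.
Proof. by rewrite /om /omega big1 // => j _; rewrite ffunE. Qed.

Definition partner (o : pauli) := match o with PX => PZ | _ => PX end.

Lemma nondeg a : a != vone -> exists w, om a w.
Proof.
move=> na.
have [j hj] : exists j, a j != PI.
  apply/existsP; apply: contraR na => /existsPn h; apply/eqP/ffunP => j.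
  by move: (h j); rewrite negbK ffunE => /eqP.
exists [ffun k => if k == j then partner (a j) else PI].
rewrite /om /omega (bigD1 j) //= ffunE eqxx big1 => [|k /negbTE kj]; last by rewrite ffunE kj; case: (a k).
by move: hj; case: (a j).
Qed.

Definition subg (A : {set V}) := vone \in A /\ forall a b, a \in A -> b \in A -> vmul a b \in A.
Definition perp (A : {set V}) := [set v | [forall a in A, ~~ om v a]].
Definition ker (w : V) (A : {set V}) := [set a in A | ~~ om w a].

Lemma perpP A v a : v \in perp A -> a \in A -> om v a = false.
Proof. by rewrite inE => /forall_inP h /h /negbTE. Qed.

Lemma perp_subg A : subg (perp A).
Proof.
split; first by rewrite inE; apply/forall_inP => a _; rewrite om1.
move=> a b ha hb; rewrite inE; apply/forall_inP => c hc.
by rewrite omD (perpP ha hc) (perpP hb hc).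
Qed.

Lemma ker_subg w A : subg A -> subg (ker w A).
Proof.
case=> h1 hm; split; first by rewrite inE h1 omC om1.
move=> a b; rewrite !inE => /andP[ha oa] /andP[hb ob].
by rewrite hm //= omDr (negbTE oa) (negbTE ob).
Qed.

Lemma halve A w a0 : subg A -> a0 \in A -> om w a0 -> (#|ker w A| * 2 = #|A|)%N.
Proof.
case=> h1 hm ha0 o0.
have hc : #|A| = (#|[set a in A | ~~ om w a]| + #|[set a in A | om w a]|)%N.
  rewrite -(cardsID [set a | om w a] A) addnC.
  by congr (_ + _)%N; apply: eq_card => x; rewrite !inE andbC.
rewrite hc /ker muln2 -addnn; congr (_ + _)%N.
have -> : [set a in A | om w a] = [set vmul a0 a | a in [set a in A | ~~ om w a]].
  apply/setP => x; rewrite inE; apply/andP/imsetP.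
    case=> hx ox; exists (vmul a0 x); last by rewrite vmulK.
    by rewrite inE hm //= omDr o0 ox.
  case=> y; rewrite inE => /andP[hy oy] ->; split; first by apply: hm.
  by rewrite omDr o0 (negbTE oy).
rewrite card_imset //; move=> x y /= e; by rewrite -(vmulK a0 x) e vmulK.
Qed.

End Comb.

Local Close Scope ring_scope.
Section C2.
Variable m : nat.
Implicit Types A : {set V m}.
Lemma card_pauli : #|{: pauli}| = 4.
Proof.
have b2pK : cancel b2p p2b by case; case; case.
rewrite (bij_eq_card (f := p2b)); first by rewrite card_prod card_bool.
by exists b2p; [apply: p2bK | apply: b2pK].
Qed.
Lemma card_V : #|{: V m}| = 4 ^ m.
Proof. by rewrite card_ffun card_pauli card_ord. Qed.

Lemma count_perp A : subg A -> (exists j, #|A| = 2 ^ j) /\ #|perp A| * #|A| = 4 ^ m.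
Proof.
have [n ltAn] := ubnP #|A|; elim: n A ltAn => // n IH A ltAn hA.
case: (boolP [exists a in A, a != vone m]) => [/exists_inP [a ha na]| none].
  have [w ow] := nondeg na.
  have hh := halve hA ha (w := w); rewrite omC ow in hh; have {}hh := hh isT.
  have A0 : 0 < #|A| by apply/card_gt0P; exists a.
  have lt : #|ker w A| < n by move: ltAn; rewrite -hh; move: A0; rewrite -hh; lia.
  have [[j hj] hp] := IH (ker w A) lt (ker_subg w hA).
  have hw : w \in perp (ker w A).
    by rewrite inE; apply/forall_inP => b; rewrite inE => /andP[_].
  have hh2 := halve (perp_subg (ker w A)) hw ow.
  have e : perp A = ker a (perp (ker w A)).
    apply/setP => v; rewrite !inE; apply/idP/idP.
      move=> /forall_inP h; have := h a ha; rewrite omC => ->; rewrite andbT; apply/forall_inP => b; rewrite inE => /andP[hb _]; exact: h.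
    case/andP => /forall_inP h oa; apply/forall_inP => b hb.
    case: (boolP (om w b)) => ob.
      have hab : vmul a b \in ker w A.
        by rewrite inE (hA.2 _ _ ha hb) /= omDr ob; rewrite omC ow.
      by have := h _ hab; rewrite omDr omC (negbTE oa).
    by apply: h; rewrite inE hb ob.
  split; first by exists j.+1; rewrite -hh hj expnS mulnC.
  by rewrite e -hh mulnA (mulnC _ 2) mulnA (mulnC 2) hh2.
have e : A = [set vone m].
  apply/setP => x; rewrite inE; apply/idP/eqP => [hx|->]; last exact: hA.1.
  by apply/eqP; apply: contraNT none => nx; apply/exists_inP; exists x.
split; first by exists 0; rewrite e cards1.
have -> : perp A = setT.
  by apply/setP => v; rewrite !inE; apply/forall_inP => b; rewrite e inE => /eqP ->; rewrite omC om1.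
by rewrite e cards1 muln1 cardsT card_V.
Qed.
End C2.

Section C3.
Variable m : nat.
Implicit Types A L S T : {set V m}.

Lemma vmulCA (a b c : V m) : vmul a (vmul b c) = vmul b (vmul a c).
Proof. by rewrite vmulA (vmulC a) -vmulA. Qed.
Lemma vmulACA (a b c d : V m) : vmul (vmul a b) (vmul c d) = vmul (vmul a c) (vmul b d).
Proof. by rewrite -!vmulA (vmulCA b). Qed.
Lemma vmul_eq1 (a b : V m) : vmul a b = vone m -> a = b.
Proof. by move=> e; rewrite -(vmulK a b) e vmulC vmul1. Qed.
Lemma vmulK' (a b : V m) : vmul (vmul a b) b = a.
Proof. by rewrite -vmulA vmulvv vmulC vmul1. Qed.

Lemma subgI A B : subg A -> subg B -> subg (A :&: B).
Proof.
case=> a1 am [b1 bm]; split; first by rewrite inE a1 b1.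
by move=> x y; rewrite !inE => /andP[xa xb] /andP[ya yb]; rewrite am ?bm.
Qed.

Lemma pow_cancel a k n : a * 2 ^ k = 2 ^ (k + n) -> a = 2 ^ n.
Proof. by rewrite expnD mulnC => /eqP; rewrite eqn_pmul2l ?expn_gt0 // => /eqP. Qed.

Definition prodset L T := [set vmul p.1 p.2 | p in setX L T].

Lemma prodset_card L T : (forall a, a \in L -> a \in T -> a = vone m) -> subg L -> subg T ->
  #|prodset L T| = #|L| * #|T|.
Proof.
move=> hI [l1 lm] [t1 tm]; rewrite /prodset card_in_imset ?cardsX //.
move=> [l t] [l' t']; rewrite !inE /= => /andP[hl ht] /andP[hl' ht'] e.
have e2 : vmul l l' = vmul t t'.
  by apply: vmul_eq1; rewrite vmulACA e vmulvv.
have h1 : vmul l l' = vone m by apply: hI; rewrite ?lm // e2 tm.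
have h2 : vmul t t' = vone m by rewrite -e2.
by rewrite (vmul_eq1 h1) (vmul_eq1 h2).
Qed.

Lemma prodset_subg L T : subg L -> subg T -> subg (prodset L T).
Proof.
move=> [l1 lm] [t1 tm]; split.
  by apply/imsetP; exists (vone m, vone m); rewrite ?inE ?l1 ?t1 //= vmulvv.
move=> a b /imsetP[[l t] /= + ->] /imsetP[[l' t'] /= + ->]; rewrite !inE /= => /andP[hl ht] /andP[hl' ht'].
by apply/imsetP; exists (vmul l l', vmul t t'); rewrite ?inE /= ?lm ?tm //= vmulACA.
Qed.

Definition iso L := forall a b, a \in L -> b \in L -> om a b = false.

Lemma iso_perp L : iso L -> {subset L <= perp L}.
Proof. by move=> h a ha; rewrite inE; apply/forall_inP => b hb; rewrite h. Qed.

Lemma exists_notin (A B : {set V m}) : #|B| < #|A| -> exists2 x, x \in A & x \notin B.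
Proof.
move=> lt; case: (boolP (A \subset B)) => [/subset_leq_card|/subsetPn [x]]; last by exists x.
by rewrite leqNgt lt.
Qed.

Lemma e4 : 4 ^ m = 2 ^ (m + m).
Proof. by rewrite addnn -mul2n expnM. Qed.

Lemma lagr S : subg S -> #|S| = 2 ^ m -> forall k, k <= m -> exists L,
  [/\ subg L, iso L, (forall a, a \in L -> a \in S -> a = vone m), #|L| = 2 ^ k
    & #|perp L :&: S| <= 2 ^ (m - k)].
Proof.
move=> hS cS; elim=> [_|k IH lek].
  have p1 : perp [set vone m] = setT.
    by apply/setP => v; rewrite !inE; apply/forall_inP => b; rewrite inE => /eqP ->; rewrite omC om1.
  exists [set vone m]; split.
  - by split; [rewrite inE | move=> a b; rewrite !inE => /eqP -> /eqP ->; rewrite vmulvv].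
  - by move=> a b; rewrite !inE => /eqP -> /eqP ->; rewrite om1.
  - by move=> a; rewrite inE => /eqP.
  - by rewrite cards1.
  - by rewrite p1 setTI cS subn0.
have [L [hL iL IL cL cT]] := IH (ltnW lek).
set T := perp L :&: S in cT.
have hT : subg T by apply: subgI; [apply: perp_subg | exact: hS].
have [[j cTj] _] := count_perp hT.
have [_ cpL] := count_perp hL.
have cpL' : #|perp L| = 2 ^ (m + m - k).
  by apply: (@pow_cancel _ k); rewrite -cL cpL e4; congr (_ ^ _); lia.
set LT := prodset L T.
have TS : {subset T <= S} by move=> a; rewrite inE => /andP[].
have hI : forall a, a \in L -> a \in T -> a = vone m by move=> a ha /TS; apply: IL.
have cLT : #|LT| = 2 ^ (k + j) by rewrite prodset_card // cL cTj expnD.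
have hLT : subg LT by apply: prodset_subg.
have jle : j <= m - k by rewrite -(@leq_exp2l 2) // -cTj.
have [x [xp xLT xB]] : exists x, [/\ x \in perp L, x \notin LT & (j = m - k -> x \notin perp LT)].
  case: (ltnP j (m - k)) => hj.
    have [x xp xn] : exists2 x, x \in perp L & x \notin LT.
      by apply: exists_notin; rewrite cpL' cLT ltn_exp2l //; lia.
    by exists x; split => // e; move: hj; rewrite e ltnn.
  have ej : j = m - k by apply/eqP; rewrite eqn_leq jle hj.
  have [_ cpLT] := count_perp hLT.
  have cLT' : #|LT| = 2 ^ m by rewrite cLT ej; congr (_ ^ _); lia.
  have cpLT' : #|perp LT| = 2 ^ m by apply: (@pow_cancel _ m); rewrite -cLT' cpLT e4.
  have cU : #|LT :|: perp LT| < 2 ^ m + 2 ^ m.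
    rewrite cardsU cLT' cpLT'.
    have : 0 < #|LT :&: perp LT|.
      apply/card_gt0P; exists (vone m); rewrite inE hLT.1 /=.
      exact: (perp_subg LT).1.
    have : 0 < 2 ^ m by rewrite expn_gt0.
    lia.
  have [x xp xn] : exists2 x, x \in perp L & x \notin (LT :|: perp LT).
    apply: exists_notin; apply: (leq_trans cU); rewrite cpL' addnn -mul2n -expnS leq_exp2l //; lia.
  by exists x; move: xn; rewrite inE negb_or => /andP[-> ->].
have LpL : {subset L <= perp L} := iso_perp iL.
have xnL : x \notin L.
  apply: contra xLT => xL; apply/imsetP; exists (x, vone m); last by rewrite /= vmulC vmul1.
  by rewrite inE /= xL (subgI (perp_subg L) hS).1.
have oxL : forall c, c \in L -> om x c = false by move=> c hc; apply: perpP xp hc.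
set L' := L :|: vmul x @^-1: L.
have inL' : forall a, (a \in L') = (a \in L) || (vmul x a \in L) by move=> a; rewrite !inE.
have omL : forall a c, a \in L' -> c \in L -> om a c = false.
  move=> a c; rewrite inL' => /orP[ha|ha] hc; first exact: iL.
  by rewrite -(vmulK x a) omD oxL // iL.
have omLx : forall a, a \in L' -> om a x = false.
  move=> a; rewrite inL' => /orP[ha|ha]; first by rewrite omC oxL.
  by rewrite -(vmulK x a) omD omaa omC oxL.
exists L'; split.
- split; first by rewrite inE hL.1.
  move=> a b; rewrite !inL' => /orP[ha|ha] /orP[hb|hb].
  + by rewrite (hL.2 _ _ ha hb).
  + by apply/orP; right; rewrite vmulCA (hL.2 _ _ ha hb).
  + by apply/orP; right; rewrite vmulA (hL.2 _ _ ha hb).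
  + apply/orP; left; have := hL.2 _ _ ha hb.
    by rewrite vmulACA vmulvv vmul1.
- move=> a b ha; rewrite inL' => /orP[hb|hb]; first exact: omL.
  by rewrite -(vmulK x b) omDr omLx // omL.
- move=> a; rewrite inL' => /orP[ha|ha] aS; first exact: IL.
  exfalso; move/negP: xLT; apply.
  have aT : a \in T.
    rewrite inE aS andbT -(vmulK x a); apply: (perp_subg L).2 => //; exact: LpL.
  apply/imsetP; exists (vmul x a, a); first by rewrite inE /= ha aT.
  by rewrite /= vmulK'.
- rewrite cardsU card_preimset; last exact: can_inj (vmulK x).
  have -> : L :&: vmul x @^-1: L = set0.
    apply/setP => a; rewrite !inE; apply/negP => /andP[ha hxa]; move/negP: xnL; apply.
    by rewrite -(vmulK' x a) hL.2.
  by rewrite cards0 subn0 cL addnn -mul2n -expnS.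
- have hsub : perp L' :&: S \subset ker x T.
    apply/subsetP => v; rewrite !inE => /andP[/forall_inP hv vS].
    have vL : [forall a in L, ~~ om v a].
      by apply/forall_inP => a ha; apply: hv; rewrite inE ha.
    by rewrite vL vS /= omC; apply: hv; rewrite inL' vmulvv hL.1 orbT.
  apply: (leq_trans (subset_leq_card hsub)).
  case: (ltnP j (m - k)) => hj.
    apply: (leq_trans (subset_leq_card (_ : ker x T \subset T))).
      by apply/subsetP => a; rewrite inE => /andP[].
    by rewrite cTj leq_exp2l //; lia.
  have ej : j = m - k by apply/eqP; rewrite eqn_leq jle hj.
  have [y yLT oy] : exists2 y, y \in LT & om x y.
    have := xB ej; rewrite inE => h.
    case: (boolP [exists y in LT, om x y]) => [/exists_inP[y ? ?]|/exists_inPn hn]; first by exists y.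
    by exfalso; move/negP: h; apply; apply/forall_inP.
  move: yLT => /imsetP[[l t] /=]; rewrite inE /= => /andP[hl ht] ey.
  have ot : om x t by move: oy; rewrite ey omDr oxL.
  have := halve hT ht ot; rewrite cTj ej.
  have -> : m - k = (m - k.+1).+1 by lia.
  by rewrite expnS mulnC => /eqP; rewrite eqn_pmul2l // => /eqP ->.
Qed.
End C3.

Local Open Scope ring_scope.
Theorem mainTheorem14 (m : nat) (P : 'I_(2 ^ m) -> pstring m) :
  (1 <= m)%N ->
  (forall i : 'I_(2 ^ m), val i = 0%N -> forall q, P i q = PI) ->
  (forall i j : 'I_(2 ^ m), (forall q, P i q = P j q) -> i = j) ->
  (forall i j : 'I_(2 ^ m), exists k : 'I_(2 ^ m),
      proportional (opmul (pmat (P i)) (pmat (P j))) (pmat (P k))) ->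
  exists phi : bits m -> algC,
    is_state phi /\
    forall i : 'I_(2 ^ m), val i <> 0%N -> expect (pmat (P i)) phi = 0.
Proof.
move=> hm h0 hinj hmul.
pose vecP (i : 'I_(2 ^ m)) : V m := [ffun j => P i j].
have vinj : injective vecP.
  move=> i j e; apply: hinj => q; have := congr1 (fun f : V m => f q) e; by rewrite /vecP !ffunE.
pose S := [set vecP i | i : 'I_(2 ^ m)].
have pos : (0 < 2 ^ m)%N by rewrite expn_gt0.
pose i0 := Ordinal pos.
have v0 : vecP i0 = vone m by apply/ffunP => q; rewrite !ffunE h0.
have hS : subg S.
  split; first by apply/imsetP; exists i0.
  move=> a b /imsetP[i _ ->] /imsetP[j _ ->].
  have [k hk] := hmul i j; apply/imsetP; exists k => //.
  by apply/ffunP => q; rewrite !ffunE (prop_smul hk).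
have cS : #|S| = (2 ^ m)%N by rewrite card_imset // card_ord.
have [L [hL iL IL cL cT]] := lagr hS cS (leqnn m).
have hnp : forall i : 'I_(2 ^ m), val i <> 0%N -> exists2 l, l \in L & om (vecP i) l.
  move=> i ni.
  have ne : vecP i != vone m by rewrite -v0; apply/eqP => /vinj e; apply: ni; rewrite e.
  have np : vecP i \notin perp L.
    apply/negP => hp.
    have : (#|[set vone m; vecP i]| <= #|perp L :&: S|)%N.
      apply: subset_leq_card; apply/subsetP => a; rewrite in_set2 => /orP[/eqP ->|/eqP ->]; rewrite in_setI.
        by rewrite ((perp_subg L).1) (hS.1).
      by rewrite hp; apply/imsetP; exists i.
    by rewrite cards2 eq_sym ne; move: cT; rewrite subnn expn0; lia.
  case: (boolP [exists l in L, om (vecP i) l]) => [/exists_inP[l ? ?]|/exists_inPn hn]; first by exists l.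
  by exfalso; move/negP: np; apply; rewrite inE; apply/forall_inP.
have pw : forall g h : {ffun 'I_m -> pauli}, g \in enum L -> h \in enum L -> omega g h = false.
  by move=> g h; rewrite !mem_enum; apply: iL.
have [v [nzv hv]] := common_eig pw.
have [phi [sphi ephi]] := normalize nzv.
exists phi; split => // i ni; apply: ephi.
have [l hl ol] := hnp i ni.
apply: (@expect_zero _ _ l); first by apply: hv; rewrite mem_enum.
by move: ol; rewrite /om /omega; under eq_bigr => j _ do rewrite /vecP ffunE.
Qed.
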